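(* Let $m\ge1$ and let $n$ be even. Let $P=\bigoplus_{i=1}^n\mathbf{m}$ be the ordinal sum of $n$ antichains each of size $m$. Then the signed cardinality statistic $SC$ is homomesic under rowmotion on $\mathcal{IC}(P)$, with average $0$ on every orbit.
   Context: For posets $P,Q$, the ordinal sum $P\oplus Q$ has underlying set the disjoint union of $P$ and $Q$, with $x\le y$ iff $x\le_P y$, or $x\le_Q y$, or $x\in P$ and $y\in Q$. $\mathbf{m}$ is an $m$-element antichain. $P=\bigoplus_{i=1}^n\mathbf{m}$ is ranked with the elements of the $i$-th summand (counted from the bottom) having rank $i-1$. A subset $I\subseteq P$ is interval-closed if for all $x,y\in I$ and $z\in P$ with $x\le z\le y$ we have $z\in I$; $\mathcal{IC}(P)$ is the set of interval-closed subsets. For $x\in P$ the toggle $t_x$ sends $I$ to $I\triangle\{x\}$ if that is interval-closed and to $I$ otherwise. Rowmotion is $\mathrm{Row}=t_{x_1}\circ\cdots\circ t_{x_N}$, where $(x_1,\dots,x_N)$ is a linear extension of $P$ (toggling from the top down). $SC(x)=1$ if $\mathrm{rk}(x)$ is even and $-1$ if odd, and $SC(I)=\sum_{x\in I}SC(x)$. A statistic is homomesic ($c$-mesic) if its average over every rowmotion orbit equals the same constant $c$. *)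

(* Defs.v *)
From mathcomp Require Import all_boot all_order all_algebra.
Set Implicit Arguments. Unset Strict Implicit. Unset Printing Implicit Defensive.
Import GRing.Theory Num.Theory.

(* The poset P = ordinal sum of n antichains of size m.
   Element (i, j) : 'I_n * 'I_m is the j-th element of the (i+1)-th summand
   counted from the bottom; its rank is i. *)
Section OrdSum.
Variables n m : nat.
Definition elt := ('I_n * 'I_m)%type.

Definition ple (x y : elt) : bool := (x == y) || (val x.1 < val y.1)%N.
Definition plt (x y : elt) : bool := (x != y) && ple x y.

Definition rk (x : elt) : nat := val x.1.

Definition interval_closed (I : {set elt}) : bool :=
  [forall x, forall y, forall z,
     ((x \in I) && (y \in I) && ple x z && ple z y) ==> (z \in I)].

Definition toggle (x : elt) (I : {set elt}) : {set elt} :=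
  let J := if x \in I then I :\ x else x |: I in
  if interval_closed J then J else I.

Definition linear_extension (s : seq elt) : Prop :=
  uniq s /\ (forall x, x \in s) /\
  (forall x y, plt x y -> (index x s < index y s)%N).

(* Row = t_{x_1} o ... o t_{x_N}  (toggling x_N first, i.e. top down) *)
Definition rowmotion (s : seq elt) (I : {set elt}) : {set elt} :=
  foldr toggle I s.

Definition SC_elt (x : elt) : int := if odd (rk x) then (-1)%R else 1%R.
Definition SC (I : {set elt}) : int := (\sum_(x in I) SC_elt x)%R.

Definition homomesic (F : {set elt} -> {set elt}) (f : {set elt} -> int)
  (c : rat) : Prop :=
  forall I : {set elt}, interval_closed I ->
    ((\sum_(J <- orbit F I) (f J)%:~R) / (size (orbit F I))%:R)%R = c.
End OrdSum.

(* Main.v *)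
Require Import Defs.
From mathcomp Require Import all_boot all_order all_algebra.
From mathcomp Require Import zify.
Set Implicit Arguments. Unset Strict Implicit. Unset Printing Implicit Defensive.

Section Basic.
Variables n m : nat.
Local Notation elt := (elt n m).
Local Notation IC := (@interval_closed n m).
Local Notation rk := (@rk n m).
Local Notation ple := (@ple n m).
Local Notation toggle := (@toggle n m).

Lemma ICP (I : {set elt}) :
  reflect (forall x y z, x \in I -> y \in I -> ple x z -> ple z y -> z \in I) (IC I).
Proof.
apply: (iffP forallP) => [H x y z xI yI xz zy|H x].
  by move/forallP: (H x) => /(_ y) /forallP /(_ z) /implyP; apply; rewrite xI yI xz zy.
apply/forallP => y; apply/forallP => z; apply/implyP => /andP[/andP[/andP[xI yI] xz] zy].
exact: H xI yI xz zy.
Qed.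

Definition neL (K : {set elt}) (q : nat) := [exists x in K, rk x == q].
Definition fullL (K : {set elt}) (q : nat) := [forall x : elt, (rk x == q) ==> (x \in K)].

Lemma ICprofP (K : {set elt}) :
  reflect (forall p q t, (p < q)%N -> (q < t)%N -> (t < n)%N -> neL K p -> neL K t -> fullL K q) (IC K).
Proof.
apply: (iffP (ICP K)) => [H p q t pq qt tn /existsP[x /andP[xK /eqP xp]] /existsP[y /andP[yK /eqP yt]]|H x y z xK yK].
  apply/forallP => z; apply/implyP => /eqP zq.
  rewrite /rk in xp yt zq; apply: (H x y) => //; rewrite /ple; apply/orP; right; rewrite ?xp ?yt ?zq //.
rewrite /ple => /orP[/eqP <- //|xz] /orP[/eqP -> //|zy].
have : fullL K (rk z).
  apply: (H (rk x) _ (rk y)) => //.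
  - exact: ltn_ord.
  - by apply/existsP; exists x; rewrite xK eqxx.
  - by apply/existsP; exists y; rewrite yK eqxx.
by move/forallP/(_ z); rewrite eqxx.
Qed.

Definition mixg (I : {set elt}) (g : nat -> bool) : {set elt} :=
  [set x | if g (rk x) then x \notin I else x \in I].

Lemma neL_mixg I g q : neL (mixg I g) q = if g q then ~~ fullL I q else neL I q.
Proof.
rewrite /neL /fullL; case: ifP => gq.
  rewrite negb_forall; apply/existsP/existsP => [[x /andP[]]|[x]].
    by rewrite inE => + /eqP xq; rewrite xq gq => xI; exists x; rewrite xq eqxx /= xI.
  by rewrite negb_imply => /andP[/eqP xq xI]; exists x; rewrite inE xq gq xI eqxx.
apply/existsP/existsP => [[x /andP[]]|[x /andP[xI /eqP xq]]].
  by rewrite inE => + /eqP xq; rewrite xq gq => xI; exists x; rewrite xq eqxx xI.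
by exists x; rewrite inE xq gq xI eqxx.
Qed.

Lemma fullL_mixg I g q : fullL (mixg I g) q = if g q then ~~ neL I q else fullL I q.
Proof.
rewrite /neL /fullL; case: ifP => gq.
  rewrite negb_exists; apply/forallP/forallP => H x; move: (H x).
    rewrite inE; case: (eqVneq (rk x) q) => [xq|] /=; last by rewrite andbF.
    by rewrite xq gq andbT.
  rewrite inE; case: (eqVneq (rk x) q) => [xq|] //=.
  by rewrite xq gq andbT.
apply/forallP/forallP => H x; move: (H x).
  by rewrite inE; case: (eqVneq (rk x) q) => [xq|] //=; rewrite xq gq.
by rewrite inE; case: (eqVneq (rk x) q) => [xq|] //=; rewrite xq gq.
Qed.

Definition tset (x : elt) (J : {set elt}) := if x \in J then J :\ x else x |: J.

Lemma in_tset x J y : (y \in tset x J) = (if y == x then y \notin J else y \in J).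
Proof.
rewrite /tset; case: ifP => xJ; rewrite !inE; case: eqVneq => [->|] //=; by rewrite xJ.
Qed.

Lemma toggleE x J : toggle x J = if IC (tset x J) then tset x J else J.
Proof. by []. Qed.

Lemma in_mixg I g y : (y \in mixg I g) = (if g (rk y) then y \notin I else y \in I).
Proof. by rewrite inE. Qed.

Lemma ple_rk x z : ple x z -> x = z \/ (rk x < rk z)%N.
Proof. by case/orP => [/eqP ->|]; [left|right]. Qed.

Lemma ple_lt x z : (rk x < rk z)%N -> ple x z.
Proof. by move=> h; apply/orP; right. Qed.

Lemma lemG r (J K : {set elt}) : IC J -> IC (mixg J (fun q => q == r)) ->
  (forall x, rk x != r -> (x \in K) = (x \in J)) -> IC K.
Proof.
move=> /ICP ICJ /ICP ICF HK; apply/ICP => x y z xK yK xz zy.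
have memF w : (w \in mixg J (fun q => q == r)) = (if rk w == r then w \notin J else w \in J).
  by rewrite in_mixg.
have alt w : w \in K -> (w \in J) || (w \in mixg J (fun q => q == r)).
  rewrite memF; case: eqVneq => [_|/HK ->]; [by case: (w \in J)|by move ->].
case: (ple_rk xz) => [<- //|xz'].
case: (ple_rk zy) => [-> //|zy'].
case: (eqVneq (rk z) r) => zr.
  have xr : rk x != r by apply/eqP => e; lia.
  have yr : rk y != r by apply/eqP => e; lia.
  have xJ : x \in J by rewrite -HK.
  have yJ : y \in J by rewrite -HK.
  have := ICJ x y z xJ yJ xz zy; have := ICF x y z; rewrite !memF zr eqxx (negbTE xr) (negbTE yr).
  by move=> /(_ xJ yJ xz zy) /negbTE ->.
rewrite HK //.
case/orP: (alt x xK) => xI; case/orP: (alt y yK) => yI.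
- exact: ICJ xI yI xz zy.
- case: (eqVneq (rk y) r) => yr; last by apply: (ICJ x y) => //; move: yI; rewrite memF (negbTE yr).
  case: (eqVneq (rk x) r) => xr; first lia.
  by move: (ICF x y z) yI; rewrite !memF (negbTE xr) (negbTE zr) yr eqxx => H yI; apply: H.
- case: (eqVneq (rk x) r) => xr; last by apply: (ICJ x y) => //; move: xI; rewrite memF (negbTE xr).
  case: (eqVneq (rk y) r) => yr; first lia.
  by move: (ICF x y z) xI; rewrite !memF (negbTE yr) (negbTE zr) xr eqxx => H xI; apply: H.
- by have := ICF x y z xI yI xz zy; rewrite memF (negbTE zr).
Qed.

Lemma lemH r x (J : {set elt}) : IC J -> rk x = r -> IC (tset x J) ->
  IC (mixg J (fun q => q == r)).
Proof.
move=> /ICP ICJ xr /ICP ICT; apply/ICP => a b z aF bF az zb.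
move: aF bF; rewrite !in_mixg => aF bF.
case: (ple_rk az) => [<- //|az'].
case: (ple_rk zb) => [-> //|zb'].
case: (eqVneq (rk z) r) => zr.
  have ar : rk a != r by apply/eqP => e; lia.
  have br : rk b != r by apply/eqP => e; lia.
  rewrite (negbTE ar) in aF; rewrite (negbTE br) in bF.
  have xJ : x \in J by apply: (ICJ a b) => //; apply: ple_lt; lia.
  have bx : b != x by apply/eqP => e; subst; rewrite eqxx in br.
  have ax : a != x by apply/eqP => e; subst; rewrite eqxx in ar.
  have := ICT a b x; rewrite !in_tset eqxx (negbTE ax) (negbTE bx) xJ.
  have h1 : ple a x by apply: ple_lt; lia.
  have h2 : ple x b by apply: ple_lt; lia.
  by move=> /(_ aF bF h1 h2).
case: (eqVneq (rk a) r) aF => ar aF; case: (eqVneq (rk b) r) bF => br bF.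
- lia.
- have bx : b != x by apply/eqP => e; subst; rewrite eqxx in br.
  case xJ: (x \in J).
    by apply: (ICJ x b) => //; apply: ple_lt; lia.
  have := ICT x b z; rewrite !in_tset eqxx (negbTE bx) xJ bF.
  have zx : z != x by apply/eqP => e; subst; rewrite eqxx in zr.
  by rewrite (negbTE zx); apply => //; apply: ple_lt; lia.
- have ax' : a != x by apply/eqP => e; subst; rewrite eqxx in ar.
  case xJ: (x \in J).
    by apply: (ICJ a x) => //; apply: ple_lt; lia.
  have := ICT a x z; rewrite !in_tset eqxx (negbTE ax') xJ aF.
  have zx : z != x by apply/eqP => e; subst; rewrite eqxx in zr.
  by rewrite (negbTE zx); apply => //; apply: ple_lt; lia.
- exact: ICJ aF bF az zb.
Qed.

Lemma block r (T : seq elt) (J : {set elt}) : uniq T -> all (fun y => rk y == r) T -> IC J ->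
  foldr toggle J T = if IC (mixg J (fun q => q == r))
                     then [set y | if y \in T then y \notin J else y \in J] else J.
Proof.
move=> uT aT ICJ; elim: T uT aT => [|t T IH] /=.
  by move=> _ _; case: ifP => // _; apply/setP => y; rewrite inE.
case/andP => tT uT /andP[/eqP tr aT]; rewrite IH //.
case: ifP => F; rewrite toggleE.
  set K := [set y | _].
  have E : tset t K = [set y | if y \in t :: T then y \notin J else y \in J].
    apply/setP => y; rewrite in_tset !inE; case: eqVneq => [->|yt] /=.
      by rewrite (negbTE tT).
    by [].
  rewrite E; case: ifP => // /negbT/negP []; apply: (lemG ICJ F) => x xr.
  rewrite inE in_cons; case: eqVneq => [e|_]; first by rewrite e tr eqxx in xr.
  case: ifP => // xT; move: aT => /allP /(_ x xT) /eqP e.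
  by rewrite e eqxx in xr.
case: ifP => // T'.
by have := lemH ICJ tr T'; rewrite F.
Qed.

Lemma foldr_IC (T : seq elt) I : IC I -> IC (foldr toggle I T).
Proof. by elim: T => //= t T IH /IH; rewrite toggleE; case: ifP. Qed.

Lemma pairwise_rk (u : seq elt) : uniq u ->
  (forall x y, x \in u -> y \in u -> (rk y < rk x)%N -> (index y u < index x u)%N) ->
  pairwise (fun x y => rk x <= rk y)%N u.
Proof.
elim: u => //= x u IH /andP[xu uu] H; rewrite IH // ?andbT.
  apply/allP => y yu; rewrite leqNgt; apply/negP => lt.
  have := H x y; rewrite !in_cons eqxx yu orbT => /(_ isT isT lt) /=.
  by rewrite ltn0.
move=> a b au bu lt; have := H a b; rewrite !in_cons au bu !orbT => /(_ isT isT lt) /=.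
have -> : (x == b) = false by apply/negbTE; apply/eqP => e; by move: bu; rewrite -e (negbTE xu).
have -> : (x == a) = false by apply/negbTE; apply/eqP => e; by move: au; rewrite -e (negbTE xu).
by [].
Qed.

Lemma split_rk (u : seq elt) k : pairwise (fun x y => rk x <= rk y)%N u ->
  [seq x <- u | (rk x < k)%N] ++ [seq x <- u | (k <= rk x)%N] = u.
Proof.
elim: u => // x u IH; rewrite pairwise_cons => /andP[ax pu] /=.
case: ltnP => xk /=; first by rewrite IH.
have E : [seq x <- u | (rk x < k)%N] = [::].
  rewrite (eq_in_filter (a2 := pred0)) ?filter_pred0 // => y yu /=.
  by move/allP: ax => /(_ y yu) h; apply/negbTE; rewrite -leqNgt (leq_trans xk h).
by move: (IH pu); rewrite E /= => ->.
Qed.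

Section Proc.
Variable s : seq elt.
Hypothesis hs : linear_extension s.

Definition Kp r I := foldr toggle I [seq x <- s | (r <= rk x)%N].

Lemma Kp_step r I : IC I ->
  Kp r I = if IC (mixg (Kp r.+1 I) (fun q => q == r)) then mixg (Kp r.+1 I) (fun q => q == r)
           else Kp r.+1 I.
Proof.
move=> ICI; case: hs => us [alls lin].
have pw : pairwise (fun x y => rk x <= rk y)%N s.
  apply: pairwise_rk => // x y _ _ lt; apply: lin; rewrite /plt /ple lt orbT andbT.
  by apply/eqP => e; rewrite e ltnn in lt.
rewrite /Kp -(split_rk r.+1 (pairwise_filter _ pw)) foldr_cat -!filter_predI.
have -> : [seq x <- s | predI (fun x => r.+1 <= rk x) (fun x => r <= rk x) x]%N
          = [seq x <- s | (r.+1 <= rk x)%N].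
  by apply: eq_filter => x /=; case: ltngtP.
have -> : [seq x <- s | predI (fun x => rk x < r.+1) (fun x => r <= rk x) x]%N
          = [seq x <- s | rk x == r].
  by apply: eq_filter => x /=; rewrite ltnS eqn_leq andbC.
rewrite (@block r) ?filter_uniq ?filter_all ?foldr_IC //.
case: ifP => // _; apply/setP => y; rewrite in_mixg inE mem_filter alls andbT //.
Qed.

Lemma Kp0 I : Kp 0 I = rowmotion s I.
Proof. by rewrite /Kp (eq_filter (a2 := predT)) ?filter_predT. Qed.

Lemma Kpn I : Kp n I = I.
Proof.
rewrite /Kp (eq_filter (a2 := pred0)) ?filter_pred0 // => x /=.
by rewrite leqNgt ltn_ord.
Qed.

End Proc.

End Basic.

Section Pure.
Variables (n lo hi : nat) (fA fB : bool).
Hypotheses (Hlh : lo <= hi) (Hhn : hi < n) (Heq : (lo == hi) ==> (fA == fB)).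
Definition pne q := (lo <= q) && (q <= hi).
Definition pfu q := ((lo < q) && (q < hi)) || ((q == lo) && fA) || ((q == hi) && fB).
Definition pext := fB || (lo == hi).
Definition pwrap := (hi.+1 == n) && pext.
Definition pbs := hi + pext.
Definition pfl q := pwrap || (q == lo) || (q == pbs).

Lemma pureC1 r p q t : p < q -> q < t -> t < n ->
  (if (r <= p) && pfl p then ~~ pfu p else pne p) ->
  (if (r <= t) && pfl t then ~~ pfu t else pne t) ->
  (if (r <= q) && pfl q then ~~ pne q else pfu q).
Proof.
move=> pq qt tn; rewrite /pfl /pbs /pwrap /pext /pne /pfu; move: Heq.
case: fA; case: fB => /=; case: (ltngtP lo hi) => //= lh;
repeat case: ifP => /=; lia.
Qed.
Lemma pureC2 r : r < n -> ~~ pfl r -> exists p q t,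
  [/\ p < q, q < t, t < n &
   [/\ (if (p == r) (+) ((r.+1 <= p) && pfl p) then ~~ pfu p else pne p),
   (if (t == r) (+) ((r.+1 <= t) && pfl t) then ~~ pfu t else pne t) &
   ~~ (if (q == r) (+) ((r.+1 <= q) && pfl q) then ~~ pne q else pfu q)]].
Proof.
move=> rn hfl.
have lr := leqnn 0; have [br|br] := ltnP pbs r; [exists lo, r.-1, r|clear lr; have [lr|lr] := ltnP lo r;
  [exists lo, r, pbs| exists r, lo, pbs]].
all: move: hfl br lr; rewrite /pfl /pbs /pwrap /pext /pne /pfu; move: Heq.
all: case: fA; case: fB => /=; case: (ltngtP lo hi) => //= lh Heq' hfl br lr.
all: do !split; repeat case: ifP => /=; lia.
Qed.
Definition pw q := (((lo <= q) && (q < pbs)) + ((lo < q) && (q <= pbs)))%N.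

Lemma plb : lo < pbs.
Proof. rewrite /pbs /pext; move: Heq; case: fA; case: fB => /=; lia. Qed.

Lemma pbn : ~~ pwrap -> pbs < n.
Proof. rewrite /pbs /pwrap /pext; move: Heq; case: fA; case: fB => /=; lia. Qed.

Lemma pw1 q : ~~ pwrap -> pfl q -> pw q = 1.
Proof. rewrite /pw /pfl /pbs /pwrap /pext; move: Heq; case: fA; case: fB => /=; lia. Qed.

Lemma pw2 q : ~~ pwrap -> ~~ pfl q -> (pfu q && (pw q == 2)) || (~~ pne q && (pw q == 0)).
Proof.
rewrite /pw /pfl /pbs /pwrap /pext /pfu /pne; move: Heq; case: fA; case: fB => /=;
case: (ltngtP lo hi) => //= lh; lia.
Qed.
End Pure.

Import GRing.Theory Num.Theory.
Section Main.
Variables n m : nat.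
Hypothesis hm : (0 < m)%N.
Local Notation elt := (elt n m).
Local Notation IC := (@interval_closed n m).
Local Notation rk := (@rk n m).
Local Notation neL := (@neL n m).
Local Notation fullL := (@fullL n m).

Lemma lvl_elt q : (q < n)%N -> exists x : elt, rk x = q.
Proof. by move=> qn; exists (Ordinal qn, Ordinal hm). Qed.

Lemma full_ne (K : {set elt}) q : (q < n)%N -> fullL K q -> neL K q.
Proof.
move=> qn /forallP H; have [x xq] := lvl_elt qn.
by apply/existsP; exists x; move: (H x); rewrite xq eqxx /= => ->.
Qed.

Lemma neL_lt (K : {set elt}) q : neL K q -> (q < n)%N.
Proof. by case/existsP => x /andP[_ /eqP <-]; exact: ltn_ord. Qed.

Lemma profile (I : {set elt}) : IC I -> I != set0 ->
  exists lo hi, [/\ (lo <= hi < n)%N,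
    forall q, (q < n)%N -> neL I q = (lo <= q <= hi)%N &
    forall q, (q < n)%N -> fullL I q = pfu lo hi (fullL I lo) (fullL I hi) q].
Proof.
move=> /ICprofP ICI /set0Pn [x0 x0I].
have ex : exists q, neL I q by exists (rk x0); apply/existsP; exists x0; rewrite x0I eqxx.
have bnd : forall q, neL I q -> (q <= n.-1)%N by move=> q /neL_lt; case: n => //.
pose lo := ex_minn ex; pose hi := ex_maxn ex bnd.
have [loP lomin] : neL I lo /\ forall q, neL I q -> (lo <= q)%N.
  by rewrite /lo; case: ex_minnP.
have [hiP himax] : neL I hi /\ forall q, neL I q -> (q <= hi)%N.
  by rewrite /hi; case: ex_maxnP.
have lh : (lo <= hi)%N := lomin _ hiP.
have mid q : (lo < q < hi)%N -> fullL I q.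
  by case/andP => a b; apply: (ICI lo q hi) => //; apply: neL_lt hiP.
have neE q : (q < n)%N -> neL I q = (lo <= q <= hi)%N.
  move=> qn; apply/idP/idP => [h|/andP[a b]]; first by rewrite lomin ?himax.
  case: (ltngtP lo q) a => // lq _; last by rewrite -lq.
  case: (ltngtP q hi) b => // qh _; last by rewrite qh.
  by apply: full_ne => //; apply: mid; rewrite lq qh.
exists lo, hi; split => //.
  by rewrite (lomin _ hiP) /=; apply: neL_lt hiP.
move=> q qn; rewrite /pfu.
have outside : (q < lo)%N || (hi < q)%N -> fullL I q = false.
  by move=> h; apply/negbTE/negP => /(full_ne qn); rewrite neE //; lia.
have [lq|lq|<-] := ltngtP lo q.
- have [qh|qh|<-] := ltngtP q hi.
  + by rewrite mid ?lq ?qh.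
  + rewrite outside ?qh ?orbT //; move: (fullL I lo) (fullL I hi) => a b; lia.
  + by move: (fullL I q) (fullL I lo) => b a; lia.
- rewrite outside ?lq //; move: (fullL I lo) (fullL I hi) => a b; lia.
- case: (eqVneq lo hi) => [<-|ne]; first by move: (fullL I lo) => a; lia.
  by move: (fullL I lo) (fullL I hi) => a b; lia.
Qed.
Lemma mixg_eq (I : {set elt}) g1 g2 : g1 =1 g2 -> mixg I g1 = mixg I g2.
Proof. by move=> e; apply/setP => x; rewrite !in_mixg e. Qed.

Lemma mixg_mixg (I : {set elt}) g h : mixg (mixg I g) h = mixg I (fun q => h q (+) g q).
Proof. by apply/setP => x; rewrite !in_mixg; case: (h _); case: (g _); rewrite //= negbK. Qed.

Lemma process (s : seq elt) (hs : linear_extension s) (fl : nat -> bool) I : IC I ->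
  (forall r, (r <= n)%N -> IC (mixg I (fun q => (r <= q)%N && fl q))) ->
  (forall r, (r < n)%N -> ~~ fl r -> ~~ IC (mixg I (fun q => (q == r) (+) ((r.+1 <= q)%N && fl q)))) ->
  rowmotion s I = mixg I fl.
Proof.
move=> ICI C1 C2.
have H k : (k <= n)%N -> Kp s (n - k) I = mixg I (fun q => (n - k <= q)%N && fl q).
  elim: k => [_|k IH kn].
    rewrite subn0 Kpn; apply/setP => x; rewrite in_mixg.
    by rewrite leqNgt (ltn_ord x.1).
  have e : n - k = (n - k.+1).+1 by lia.
  rewrite (Kp_step hs) // -e IH ?(ltnW kn) // mixg_mixg.
  case flr: (fl (n - k.+1)).
    rewrite (@mixg_eq _ _ (fun q => (n - k.+1 <= q)%N && fl q)); last first.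
      move=> q; case: (eqVneq q (n - k.+1)) => [->|ne]; first by rewrite flr; lia.
      by move: (fl q) => b; lia.
    by rewrite C1 //; lia.
  have := C2 (n - k.+1) ltac:(lia) (negbT flr); rewrite -e => /negbTE ->.
  apply: mixg_eq => q; case: (eqVneq q (n - k.+1)) => [->|ne]; first by rewrite flr; lia.
  by move: (fl q) => b; lia.
rewrite -Kp0; move: (H n (leqnn n)); rewrite subnn => ->; exact: mixg_eq.
Qed.
Definition cnt (K : {set elt}) q := #|[set x in K | rk x == q]|.
Definition sg (q : nat) : int := if odd q then (-1)%R else 1%R.

Lemma sgS q : sg q.+1 = (- sg q)%R.
Proof. by rewrite /sg /=; case: (odd q); rewrite ?opprK. Qed.

Lemma SC_lvl (K : {set elt}) : SC K = (\sum_(j < n) sg j * (cnt K j)%:Z)%R.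
Proof.
rewrite /SC (partition_big (fun x : elt => x.1) predT) //=.
apply: eq_bigr => j _.
rewrite (eq_bigr (fun _ => sg j)); last first.
  by move=> x /andP[_ /eqP <-].
rewrite (eq_bigl (fun x => x \in [set x in K | rk x == j])); last first.
  by move=> x; rewrite !inE /rk; congr (_ && _); apply/eqP/eqP => [->|/val_inj].
by rewrite sumr_const pmulrn -mulrzr intz.
Qed.

Definition Lv q : {set elt} := [set x | rk x == q].

Lemma card_Lv q : (q < n)%N -> #|Lv q| = m.
Proof.
move=> qn; have -> : Lv q = setX [set Ordinal qn] setT.
  by apply/setP => x; rewrite !inE andbT -val_eqE.
by rewrite cardsX cards1 cardsT card_ord mul1n.
Qed.

Lemma cnt_le K q : (q < n)%N -> (cnt K q <= m)%N.
Proof.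
move=> qn; rewrite -(card_Lv qn); apply: subset_leq_card.
by apply/subsetP => x; rewrite !inE => /andP[].
Qed.

Lemma cnt_mixg (I : {set elt}) g q : (q < n)%N ->
  cnt (mixg I g) q = if g q then (m - cnt I q)%N else cnt I q.
Proof.
move=> qn; rewrite /cnt; case: ifP => gq.
  transitivity #|Lv q :\: [set x in I | rk x == q]|; last first.
    by rewrite cardsDS ?card_Lv //; apply/subsetP => x; rewrite !inE => /andP[].
  apply: eq_card => x; rewrite !inE.
  by case: (eqVneq (rk x) q) => [->|]; rewrite ?gq ?eqxx ?andbF ?andbT.
apply: eq_card => x; rewrite !inE.
by case: (eqVneq (rk x) q) => [->|]; rewrite ?gq ?eqxx ?andbF ?andbT.
Qed.

Lemma cnt_full (I : {set elt}) q : (q < n)%N -> fullL I q -> cnt I q = m.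
Proof.
move=> qn /forallP H; rewrite /cnt -[RHS](card_Lv qn); apply: eq_card => x.
by rewrite !inE; case: (eqVneq (rk x) q) => [xq|]; rewrite ?andbF ?andbT //; move: (H x); rewrite xq eqxx.
Qed.

Lemma cnt_empty (I : {set elt}) q : ~~ neL I q -> cnt I q = 0%N.
Proof.
rewrite negb_exists => /forallP H; rewrite /cnt; apply/eqP; rewrite cards_eq0; apply/eqP/setP => x.
by rewrite !inE; move: (H x) => /negbTE.
Qed.

Lemma SC_sum (I J : {set elt}) : (SC I + SC J = \sum_(j < n) sg j * (cnt I j + cnt J j)%:Z)%R.
Proof. by rewrite !SC_lvl -big_split /=; apply: eq_bigr => j _; rewrite PoszD mulrDr. Qed.

Lemma alt_sum N : (\sum_(q < N) sg q = if odd N then 1 else 0)%R.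
Proof.
elim: N => [|N IH]; first by rewrite big_ord0.
rewrite big_ord_recr /= IH /sg /=; case: (odd N) => //=; by rewrite ?addrN ?add0r.
Qed.

Lemma alt_w lo bs N : (lo < bs)%N ->
  (\sum_(q < N) sg q * (((lo <= q) && (q < bs)) + ((lo < q) && (q <= bs)))%N%:Z =
   if (lo < N <= bs)%N then sg N.-1 else 0)%R.
Proof.
move=> lb; elim: N => [|N IH]; first by rewrite big_ord0.
rewrite big_ord_recr /= IH.
have : (N < lo \/ N = lo \/ (lo < N /\ N < bs) \/ N = bs \/ bs < N)%N by lia.
case=> [Nl|[Nl|[Nl|[Nl|Nl]]]].
- have -> : (((lo <= N) && (N < bs)) + ((lo < N) && (N <= bs)))%N = 0%N by lia.
  have -> : (lo < N <= bs)%N = false by lia.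
  have -> : (lo < N.+1 <= bs)%N = false by lia.
  by rewrite mulr0 addr0.
- have -> : (((lo <= N) && (N < bs)) + ((lo < N) && (N <= bs)))%N = 1%N by lia.
  have -> : (lo < N <= bs)%N = false by lia.
  have -> : (lo < N.+1 <= bs)%N = true by lia.
  by rewrite mulr1 add0r.
- have -> : (((lo <= N) && (N < bs)) + ((lo < N) && (N <= bs)))%N = 2%N by lia.
  have -> : (lo < N <= bs)%N = true by lia.
  have -> : (lo < N.+1 <= bs)%N = true by lia.
  case: N Nl {IH} => [[]//|N _ /=]; rewrite sgS.
  by rewrite -[2%N]/(1 + 1)%N PoszD mulrDr mulr1 addrA addrN add0r.
- have -> : (((lo <= N) && (N < bs)) + ((lo < N) && (N <= bs)))%N = 1%N by lia.
  have -> : (lo < N <= bs)%N = true by lia.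
  have -> : (lo < N.+1 <= bs)%N = false by lia.
  case: N Nl {IH} => [e|N _ /=]; first by rewrite -e in lb.
  by rewrite sgS mulr1 addrN.
- have -> : (((lo <= N) && (N < bs)) + ((lo < N) && (N <= bs)))%N = 0%N by lia.
  have -> : (lo < N <= bs)%N = false by lia.
  have -> : (lo < N.+1 <= bs)%N = false by lia.
  by rewrite mulr0 addr0.
Qed.
Lemma SC_all (hn : ~~ odd n) (I : {set elt}) : SC (mixg I (fun _ => true)) = (- SC I)%R.
Proof.
apply/eqP; rewrite -subr_eq0 opprK SC_sum.
rewrite (eq_bigr (fun j : 'I_n => sg j * m%:Z)%R); last first.
  by move=> j _; rewrite cnt_mixg // subnK // cnt_le.
by rewrite -big_distrl /= alt_sum (negbTE hn) mul0r.
Qed.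

Lemma row_SC (hn : ~~ odd n) (s : seq elt) (hs : linear_extension s) (I : {set elt}) :
  IC I -> SC (rowmotion s I) = (- SC I)%R.
Proof.
move=> ICI; case: (eqVneq I set0) => [I0|ne0].
  rewrite (@process s hs (fun _ => true)) ?SC_all //.
  move=> r rn; apply/ICprofP => p q t pq qt tn; rewrite !neL_mixg fullL_mixg I0 !andbT.
  have ne0 k : neL set0 k = false by apply/existsP => -[x]; rewrite inE.
  rewrite !ne0; case: ifP => // rp _ _; have -> : (r <= q)%N by lia.
  by [].
have [lo [hi [/andP[lh hn'] neE fuE]]] := profile ICI ne0.
set fA := fullL I lo in fuE; set fB := fullL I hi in fuE.
have Heq : (lo == hi) ==> (fA == fB) by apply/implyP => /eqP e; rewrite /fA /fB e.
rewrite (@process s hs (pfl n lo hi fB)) //.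
- case W: (pwrap n lo hi fB).
    by rewrite (@mixg_eq _ _ (fun _ => true)) ?SC_all // => q; rewrite /pfl W.
  apply/eqP; rewrite -subr_eq0 opprK SC_sum.
  rewrite (eq_bigr (fun j : 'I_n => sg j * (pw lo hi fB j)%:Z * m%:Z)%R); last first.
    move=> j _; rewrite -mulrA -PoszM; congr (_ * Posz _)%R.
    rewrite cnt_mixg //; case F: (pfl n lo hi fB j).
      by rewrite subnK ?cnt_le // (@pw1 n lo hi fA fB lh hn' Heq j (negbT W) F) mul1n.
    have := @pw2 n lo hi fA fB lh hn' Heq j (negbT W) (negbT F); case/orP => /andP[h /eqP ->].
      by rewrite cnt_full ?fuE //; lia.
    by rewrite cnt_empty ?neE // mul0n.
  rewrite -big_distrl /= alt_w ?(@plb n lo hi fA fB lh hn' Heq) // (_ : (lo < n <= pbs lo hi fB)%N = false) ?mul0r //.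
  by have := @pbn n lo hi fA fB lh hn' Heq (negbT W); lia.
- move=> r rn; apply/ICprofP => p q t pq qt tn.
  have pn : (p < n)%N by lia.
  have qn : (q < n)%N by lia.
  rewrite !neL_mixg fullL_mixg (neE p) // (neE t) // (neE q) // (fuE p) // (fuE t) // (fuE q) //.
  exact: pureC1.
- move=> r rn nfl.
  have [p [q [t [pq qt tn [h1 h2 h3]]]]] := @pureC2 n lo hi fA fB lh hn' Heq r rn nfl.
  apply/negP => /ICprofP H; have := H p q t pq qt tn.
  have pn : (p < n)%N by lia.
  have qn : (q < n)%N by lia.
  rewrite !neL_mixg fullL_mixg (neE p) // (neE t) // (neE q) // (fuE p) // (fuE t) // (fuE q) //.
  by move=> /(_ h1 h2) h; rewrite h in h3.
Qed.
End Main.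


Section Fin.
Variables n m : nat.
Local Notation elt := (elt n m).
Local Notation IC := (@interval_closed n m).
Local Notation toggle := (@toggle n m).

Lemma toggle_inv x (J : {set elt}) : IC J -> toggle x (toggle x J) = J.
Proof.
move=> ICJ; rewrite [toggle x J]toggleE; case: ifP => H; last by rewrite toggleE H.
have E : tset x (tset x J) = J.
  by apply/setP => y; rewrite !in_tset; case: eqVneq => // _; rewrite negbK.
by rewrite toggleE E ICJ.
Qed.

Lemma row_inj (s : seq elt) (I1 I2 : {set elt}) : IC I1 -> IC I2 ->
  rowmotion s I1 = rowmotion s I2 -> I1 = I2.
Proof.
move=> h1 h2; rewrite /rowmotion; elim: s => //= x s IH e; apply: IH.
by rewrite -(toggle_inv x (foldr_IC s h1)) e toggle_inv // foldr_IC.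
Qed.

Lemma tele (F : {set elt} -> {set elt}) :
  (forall J, IC J -> IC (F J)) -> (forall J, IC J -> SC (F J) = (- SC J)%R) ->
  forall k J, IC J -> (\sum_(K <- traject F J k) SC K *+ 2 = SC J - SC (iter k F J))%R.
Proof.
move=> hom hSC; elim => [|k IH] J ICJ; first by rewrite big_nil subrr.
rewrite /= big_cons IH ?hom // -iterSr hSC // mulr2n.
by rewrite -iterS addrA addrK.
Qed.
End Fin.

Theorem theorem3p18 (m n : nat) (hm : (1 <= m)%N) (hn : ~~ odd n)
  (s : seq (elt n m)) (hs : linear_extension s) :
  homomesic (rowmotion s) (@SC n m) 0%R.
Proof.
move=> I ICI.
have hom : {homo rowmotion s : x / x \in [pred K | interval_closed K]}.
  by move=> x; rewrite !inE; apply: foldr_IC.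
have inj : {in [pred K | interval_closed K] &, injective (rowmotion s)}.
  by move=> x y; rewrite !inE => hx hy; apply: row_inj.
have it := iter_order_in hom inj (x := I) ICI.
have S0 : (\sum_(J <- orbit (rowmotion s) I) SC J = 0)%R.
  have := @tele n m (rowmotion s) (fun J h => foldr_IC s h) (fun J h => row_SC hm hn hs h)
    (order (rowmotion s) I) I ICI.
  rewrite it subrr -/(orbit _ _).
  rewrite (_ : (\sum_(K <- orbit (rowmotion s) I) SC K *+ 2)%R = (\sum_(K <- orbit (rowmotion s) I) SC K) *+ 2)%R;
    last by rewrite sumrMnl.
  by move/eqP; rewrite mulrn_eq0 /= => /eqP.
by rewrite -rmorph_sum /= S0 mul0r.
Qed.
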